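(* For every integer $n\geq 1$, $\mathrm{R}_3(\mathcal{B}_n)\leq \mathrm{RR}(\mathcal{B}_2:\mathcal{B}_n)\leq \mathrm{R}_3(\mathcal{B}_n)+n$.
   Context: $\mathcal{B}_N$ denotes the Boolean lattice of all subsets of $[N]$ ordered by inclusion. An induced copy of a poset $\mathcal{P}$ in a poset $\mathcal{Q}$ is the image of an injection $f:\mathcal{P}\to\mathcal{Q}$ with $f(X)\le f(Y)$ iff $X\le Y$. Monochromatic: all sets share a color; rainbow: pairwise distinct colors. $\mathrm{R}_k(\mathcal{P})$ is the smallest $n$ such that every coloring of $\mathcal{B}_n$ with $k$ colors contains a monochromatic induced copy of $\mathcal{P}$. $\mathrm{RR}(\mathcal{Q}:\mathcal{P})$ is the smallest $n$ such that every coloring (with any number of colors) of the sets of $\mathcal{B}_n$ contains a rainbow induced copy of $\mathcal{Q}$ or a monochromatic induced copy of $\mathcal{P}$. *)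

(* Defs.v *)
From mathcomp Require Import all_boot.
Set Implicit Arguments. Unset Strict Implicit. Unset Printing Implicit Defensive.

(* The Boolean lattice B_N is {set 'I_N} ordered by \subset. *)

Definition induced_copy (m N : nat) (f : {set 'I_m} -> {set 'I_N}) : Prop :=
  injective f /\ forall X Y : {set 'I_m}, (f X \subset f Y) = (X \subset Y).

Definition has_mono_copy (C : Type) (m N : nat) (c : {set 'I_N} -> C) : Prop :=
  exists f : {set 'I_m} -> {set 'I_N},
    induced_copy f /\ forall X Y : {set 'I_m}, c (f X) = c (f Y).

Definition has_rainbow_copy (C : Type) (m N : nat) (c : {set 'I_N} -> C) : Prop :=
  exists f : {set 'I_m} -> {set 'I_N},
    induced_copy f /\ injective (fun X => c (f X)).

Definition ramsey_prop (k m N : nat) : Prop :=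
  forall c : {set 'I_N} -> 'I_k, has_mono_copy m c.

(* Property defining RR(B_q : B_m): every coloring (any number of colors;
   colors taken in nat, which suffices since B_N is finite) of B_N has a
   rainbow copy of B_q or a monochromatic copy of B_m. *)
Definition rainbow_ramsey_prop (q m N : nat) : Prop :=
  forall c : {set 'I_N} -> nat, has_rainbow_copy q c \/ has_mono_copy m c.

Definition is_least (P : nat -> Prop) (a : nat) : Prop :=
  P a /\ forall b, P b -> a <= b.

(* Main.v *)
Require Import Defs.
From mathcomp Require Import all_boot.
From Stdlib Require Import Classical.
From mathcomp Require Import zify.
From Stdlib Require Import Lia.
Set Implicit Arguments. Unset Strict Implicit. Unset Printing Implicit Defensive.


Lemma ind_of (m N : nat) (f : {set 'I_m} -> {set 'I_N}) :
  (forall X Y, (f X \subset f Y) = (X \subset Y)) -> induced_copy f.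
Proof.
move=> H; split=> // X Y eXY; apply/eqP; rewrite eqEsubset -!H eXY subxx //.
Qed.

Lemma I2cases (i : 'I_2) : i = ord0 \/ i = ord_max.
Proof. case: i => [[|[|k]] Hk]; [left|right|]; try exact/val_inj. by []. Qed.

Lemma sub2 (X Y : {set 'I_2}) : (X \subset Y) =
  ((ord0 \in X) ==> (ord0 \in Y)) && ((ord_max \in X) ==> (ord_max \in Y)).
Proof.
apply/subsetP/andP => [H|[H0 H1] i]; first by split; apply/implyP; apply: H.
by case: (I2cases i) => ->; apply/implyP.
Qed.

Lemma rainbowB2 M (c : {set 'I_M} -> nat) (p u v q : {set 'I_M}) :
  p \subset u -> p \subset v -> u \subset q -> v \subset q ->
  ~~ (u \subset v) -> ~~ (v \subset u) ->
  c p != c u -> c p != c v -> c p != c q -> c u != c v -> c u != c q -> c v != c q ->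
  has_rainbow_copy 2 c.
Proof.
move=> pu pv uq vq nuv nvu Hpu Hpv Hpq Huv Huq Hvq.
have pq : p \subset q by apply: subset_trans uq.
have nup : ~~ (u \subset p) by apply: contra nuv => up; apply: subset_trans pv.
have nvp : ~~ (v \subset p) by apply: contra nvu => vp; apply: subset_trans pu.
have nqp : ~~ (q \subset p) by apply: contra nup => qp; apply: subset_trans qp.
have nqu : ~~ (q \subset u) by apply: contra nvu => qu; apply: subset_trans qu.
have nqv : ~~ (q \subset v) by apply: contra nuv => qv; apply: subset_trans qv.
pose g (X : {set 'I_2}) := if ord0 \in X then (if ord_max \in X then q else u)
                           else (if ord_max \in X then v else p).
have Hg : forall X Y, (g X \subset g Y) = (X \subset Y).
  move=> X Y; rewrite sub2 /g.
  by case: (ord0 \in X); case: (ord_max \in X); case: (ord0 \in Y); case: (ord_max \in Y);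
    rewrite /= ?subxx ?(negbTE nuv) ?(negbTE nvu) ?(negbTE nup) ?(negbTE nvp)
      ?(negbTE nqp) ?(negbTE nqu) ?(negbTE nqv) ?pu ?pv ?pq ?uq ?vq.
exists g; split; first exact: ind_of.
move=> X Y E; apply/eqP; rewrite eqEsubset !sub2.
move: E; rewrite /g.
by case: (ord0 \in X); case: (ord_max \in X); case: (ord0 \in Y); case: (ord_max \in Y);
  move=> /= E; rewrite ?subxx //;
  first [ by rewrite E eqxx in Hpu | by rewrite E eqxx in Hpv | by rewrite E eqxx in Hpq
        | by rewrite E eqxx in Huv | by rewrite E eqxx in Huq | by rewrite E eqxx in Hvq
        | by rewrite -E eqxx in Hpu | by rewrite -E eqxx in Hpv | by rewrite -E eqxx in Hpq
        | by rewrite -E eqxx in Huv | by rewrite -E eqxx in Huq | by rewrite -E eqxx in Hvq ].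
Qed.


Lemma sub1 (X Y : {set 'I_1}) : (X \subset Y) = ((ord0 \in X) ==> (ord0 \in Y)).
Proof.
apply/subsetP/implyP => [H|H i]; first exact: H.
by rewrite (ord1 i); apply: H.
Qed.

Lemma monoB1 M (c : {set 'I_M} -> nat) (lo hi : {set 'I_M}) :
  lo \subset hi -> lo != hi -> c lo = c hi -> has_mono_copy 1 c.
Proof.
move=> lh nlh clh.
have nhl : ~~ (hi \subset lo) by apply: contra nlh => hl; rewrite eqEsubset lh hl.
pose g (X : {set 'I_1}) := if ord0 \in X then hi else lo.
exists g; split.
  apply: ind_of => X Y; rewrite sub1 /g.
  by case: (ord0 \in X); case: (ord0 \in Y); rewrite /= ?subxx ?lh ?(negbTE nhl).
by move=> X Y; rewrite /g; case: (ord0 \in X); case: (ord0 \in Y).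
Qed.

Lemma Srule M (c : {set 'I_M} -> nat) (P Q U V : {set 'I_M}) :
  ~ has_rainbow_copy 2 c -> c P != c Q ->
  P \subset U -> P \subset V -> U \subset Q -> V \subset Q ->
  ~~ (U \subset V) -> ~~ (V \subset U) ->
  c U != c P -> c U != c Q -> c V != c P -> c V != c Q -> c U = c V.
Proof.
move=> Hnr cPQ PU PV UQ VQ nUV nVU a1 a2 a3 a4.
apply/eqP/negP => /negP H; apply: Hnr.
apply: (rainbowB2 PU PV UQ VQ nUV nVU) => //; by rewrite eq_sym.
Qed.

Lemma not_setT_ex n (Y : {set 'I_n}) : Y != setT -> exists i, i \notin Y.
Proof.
move=> YT; case: (pickP (fun i => i \notin Y)) => [i iY|H]; first by exists i.
by case/negP: YT; apply/eqP/setP => i; rewrite inE; move: (H i) => /= /negbFE.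
Qed.

Lemma key1 M (c : {set 'I_M} -> nat) (P Q : {set 'I_M}) (F : {set 'I_1} -> {set 'I_M}) :
  ~ has_rainbow_copy 2 c -> P \subset Q -> c P != c Q ->
  (forall X Y, (F X \subset F Y) = (X \subset Y)) ->
  (forall Y, P \subset F Y) -> (forall Y, F Y \subset Q) ->
  (forall Y, c (F Y) != c P) -> (forall Y, c (F Y) != c Q) ->
  has_mono_copy 1 c.
Proof.
move=> Hnr PQ cPQ HF FP FQ cFP cFQ.
have Y01 : forall Y : {set 'I_1}, Y = set0 \/ Y = setT.
  move=> Y; case: (boolP (ord0 \in Y)) => h; [right|left]; apply/setP => i;
  by rewrite (ord1 i) ?inE ?h ?(negbTE h).
set b := F set0; set t := F setT.
have bt : b \subset t by rewrite HF sub0set.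
case: (eqVneq (c b) (c t)) => [cbt|cbt].
  exists F; split; first exact: ind_of.
  by move=> X Y; case: (Y01 X) => ->; case: (Y01 Y) => ->.
have : P \proper b by rewrite properEneq FP andbT; apply: contraNneq (cFP set0) => ->; exact: eqxx.
case/properP => _ [x xb xP].
have : t \proper Q by rewrite properEneq FQ andbT; apply: contraNneq (cFQ setT) => <-; exact: eqxx.
case/properP => _ [y yQ yt].
have xt : x \in t by apply: (subsetP bt).
have yb : y \notin b by apply: contra yt; apply: (subsetP bt).
have xy : x != y by apply: contraNneq yt => <-.
pose W := (b :\ x) :|: [set y].
have xW : x \notin W by rewrite !inE eqxx /= (negbTE xy).
have yW : y \in W by rewrite !inE eqxx orbT.
have PW : P \subset W.
  apply/subsetP => z zP; rewrite !inE (subsetP (FP set0) z zP) andbT.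
  by apply/orP; left; apply: contraNneq xP => <-.
have WQ : W \subset Q.
  apply/subsetP => z; rewrite !inE => /orP [/andP [_ zb]|/eqP ->] //.
  exact: (subsetP (FQ set0)).
have n1 : ~~ (b \subset W) by apply: contra xW => /subsetP; apply.
have n2 : ~~ (W \subset b) by apply: contra yb => /subsetP; apply.
have n3 : ~~ (t \subset W) by apply: contra xW => /subsetP; apply.
have n4 : ~~ (W \subset t) by apply: contra yt => /subsetP; apply.
have Pt : P \subset t := subset_trans (FP set0) bt.
case: (eqVneq (c W) (c P)) => [cWP|cWP].
  apply: (monoB1 PW); last by rewrite cWP.
  apply: contraNneq yt => PeW; apply: (subsetP Pt); by rewrite PeW.
case: (eqVneq (c W) (c Q)) => [cWQ|cWQ].
  apply: (monoB1 WQ); last by rewrite cWQ.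
  apply: contraNneq xW => WeQ; rewrite WeQ; exact: (subsetP (FQ set0)).
have e1 := Srule Hnr cPQ PW (FP set0) WQ (FQ set0) n2 n1 cWP cWQ (cFP _) (cFQ _).
have e2 := Srule Hnr cPQ PW (FP setT) WQ (FQ setT) n4 n3 cWP cWQ (cFP _) (cFQ _).
by case/eqP: cbt; rewrite -e1 -e2.
Qed.



Lemma subD1r (T : finType) (A B : {set T}) x : (A :\ x \subset B :\ x) = (A :\ x \subset B).
Proof.
apply/subsetP/subsetP => H z zA; first by have := H z zA; rewrite inE => /andP [].
by move: (zA); rewrite !inE => /andP [-> _] /=; apply: H.
Qed.

Lemma key2 M n (c : {set 'I_M} -> nat) (P Q : {set 'I_M}) (F : {set 'I_n} -> {set 'I_M}) :
  1 < n ->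
  ~ has_rainbow_copy 2 c -> P \subset Q -> c P != c Q ->
  (forall X Y, (F X \subset F Y) = (X \subset Y)) ->
  (forall Y, P \subset F Y) -> (forall Y, F Y \subset Q) ->
  (forall Y, c (F Y) != c P) -> (forall Y, c (F Y) != c Q) ->
  has_mono_copy n c.
Proof.
move=> n2 Hnr PQ cPQ HF FP FQ cFP cFQ.
have n0 : 0 < n by apply: ltn_trans n2.
pose i0 : 'I_n := Ordinal n0.
pose i1 : 'I_n := Ordinal n2.
have other : forall i : 'I_n, exists j, j != i.
  move=> i; case: (eqVneq i i0) => [->|h]; last by exists i0; rewrite eq_sym.
  by exists i1.
have SR : forall Y Y' : {set 'I_n}, ~~ (Y \subset Y') -> ~~ (Y' \subset Y) -> c (F Y) = c (F Y').
  move=> Y Y' h1 h2; apply: (Srule Hnr cPQ) => //; by rewrite HF.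
pose g := c (F [set i0]).
have sing : forall i, c (F [set i]) = g.
  move=> i; case: (eqVneq i i0) => [->//|h]; apply: SR; rewrite sub1set inE //.
  by rewrite eq_sym.
have mid : forall Y : {set 'I_n}, Y != set0 -> Y != setT -> c (F Y) = g.
  move=> Y Y0 YT; have [i iY] := not_setT_ex YT.
  have [j jY] := set0Pn _ Y0.
  rewrite -(sing i); apply: SR; last by rewrite sub1set.
  apply/negP => /subsetP /(_ j jY); rewrite inE => /eqP eji.
  by rewrite -eji jY in iY.
have b_sub : forall Z : {set 'I_n}, F set0 \subset F Z by move=> Z; rewrite HF sub0set.
have t_sup : forall Z : {set 'I_n}, F Z \subset F setT by move=> Z; rewrite HF subsetT.
set b := F set0 in b_sub *; set t := F setT in t_sup *.
case: (eqVneq (c t) g) => [ctg|ctg].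
  case: (eqVneq (c b) g) => [cbg|cbg].
    exists F; split; first exact: ind_of.
    have all : forall Y, c (F Y) = g.
      move=> Y; case: (eqVneq Y set0) => [->//|Y0].
      case: (eqVneq Y setT) => [->//|YT]; exact: mid.
    by move=> X Y; rewrite !all.
  have : P \proper b by rewrite properEneq FP andbT; apply: contraNneq (cFP set0) => ->; exact: eqxx.
  case/properP => _ [x xb xP].
  have xF : forall Z : {set 'I_n}, x \in F Z by move=> Z; apply: (subsetP (b_sub Z)).
  have subx : forall Z Z' : {set 'I_n}, (F Z :\ x \subset F Z') = (Z \subset Z').
    move=> Z Z'; rewrite -HF; apply/subsetP/subsetP => H z.
      by case: (eqVneq z x) => [->|zx] zZ; [exact: xF|apply: H; rewrite !inE zx zZ].
    by rewrite inE => /andP [_ /H].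
  have Wc : forall Y : {set 'I_n}, Y != set0 -> c (F Y :\ x) = c P.
    move=> Y Y0; have [i iY] := set0Pn _ Y0.
    set W := F Y :\ x.
    have m0 : setT :\ i != set0.
      have [j ji] := other i; apply/set0Pn; exists j; by rewrite !inE ji.
    have mT : setT :\ i != setT by apply/negP => /eqP /setP /(_ i); rewrite !inE eqxx.
    have cm := mid _ m0 mT.
    set m := F (setT :\ i) in cm.
    have PW : P \subset W.
      apply/subsetP => z zP; rewrite !inE (subsetP (FP Y) z zP) andbT.
      by apply: contraNneq xP => <-.
    have WQ : W \subset Q by apply: subset_trans (FQ Y); apply: subsetDl.
    have xW : x \notin W by rewrite !inE eqxx.
    have n1 : ~~ (W \subset m).
      rewrite /W subx; apply/negP => /subsetP /(_ i iY); by rewrite !inE eqxx.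
    have n2' : ~~ (m \subset W) by apply/negP => /subsetP /(_ x (xF _)); rewrite (negbTE xW).
    have n3 : ~~ (b \subset W) by apply/negP => /subsetP /(_ x xb); rewrite (negbTE xW).
    have n4 : ~~ (W \subset b) by rewrite /W subx subset0.
    case: (eqVneq (c W) (c P)) => [//|cWP].
    case: (eqVneq (c W) (c Q)) => [cWQ|cWQ].
      { exfalso; apply: Hnr.
      apply: (rainbowB2 (FP set0) PW (t_sup set0) (subset_trans (subsetDl _ _) (t_sup Y)) n3 n4).
      all: rewrite ?cWQ ?ctg; first [exact: cPQ | exact: cbg | exact: cFP | exact: cFQ
        | rewrite eq_sym; first [exact: cFP | exact: cFQ | exact: cPQ | exact: cbg]]. }
    have e1 := Srule Hnr cPQ PW (FP _) WQ (FQ _) n1 n2' cWP cWQ (cFP _) (cFQ _).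
    have e2 := Srule Hnr cPQ PW (FP set0) WQ (FQ set0) n4 n3 cWP cWQ (cFP _) (cFQ _).
    by case/eqP: cbg; rewrite -e2 e1.
  pose G (Y : {set 'I_n}) := if Y == set0 then P else F Y :\ x.
  exists G; split.
    apply: ind_of => X Y; rewrite /G.
    case: (eqVneq X set0) => [->|X0]; case: (eqVneq Y set0) => [->|Y0] //=.
    - rewrite !subxx //.
    - rewrite sub0set; apply/subsetP => z zP; rewrite !inE (subsetP (FP Y) z zP) andbT.
      by apply: contraNneq xP => <-.
    - rewrite subset0 (negbTE X0); apply/negP => H.
      have : F X :\ x \subset F set0 by apply: subset_trans H (FP set0).
      by rewrite subx subset0 (negbTE X0).
    - by rewrite subD1r subx.
  move=> X Y; rewrite /G.
  case: (eqVneq X set0) => [_|X0]; case: (eqVneq Y set0) => [_|Y0] //=; rewrite ?Wc //.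
have : t \proper Q by rewrite properEneq FQ andbT; apply: contraNneq (cFQ setT) => <-; exact: eqxx.
case/properP => _ [y yQ yt].
have yF : forall Z : {set 'I_n}, y \notin F Z by move=> Z; apply: contra yt; apply: (subsetP (t_sup Z)).
have suby : forall Z Z' : {set 'I_n}, (F Z :|: [set y] \subset F Z' :|: [set y]) = (Z \subset Z').
  move=> Z Z'; rewrite -HF; apply/subsetP/subsetP => H z zZ.
    have : z \in F Z' :|: [set y] by apply: H; rewrite inE zZ.
    rewrite !inE => /orP [//|/eqP zy].
    by rewrite zy (negbTE (yF Z)) in zZ.
  by move: zZ; rewrite !inE => /orP [/H ->//|->]; rewrite orbT.
have Wc : forall Y : {set 'I_n}, Y != setT -> c (F Y :|: [set y]) = c Q.
  move=> Y YT; have [i iY] := not_setT_ex YT.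
  set W := F Y :|: [set y].
  have cm := sing i.
  set m := F [set i] in cm.
  have PW : P \subset W by apply: subset_trans (FP Y) (subsetUl _ _).
  have WQ : W \subset Q.
    by apply/subsetP => z; rewrite !inE => /orP [/(subsetP (FQ Y))//| /eqP ->].
  have yW : y \in W by rewrite !inE eqxx orbT.
  have n1 : ~~ (W \subset m) by apply/negP => /subsetP /(_ y yW); rewrite (negbTE (yF _)).
  have n2' : ~~ (m \subset W).
    apply/negP => /subsetP H; move: iY; apply/negP; rewrite negbK -sub1set -HF.
    apply/subsetP => z zm; have := H z zm; rewrite !inE => /orP [//|/eqP zy].
    by rewrite zy (negbTE (yF _)) in zm.
  have n3 : ~~ (t \subset W).
    apply/negP => /subsetP H; move: YT; apply/negP; rewrite negbK -subTset -HF.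
    apply/subsetP => z zm; have := H z zm; rewrite !inE => /orP [//|/eqP zy].
    by rewrite zy (negbTE (yF _)) in zm.
  have n4 : ~~ (W \subset t) by apply/negP => /subsetP /(_ y yW); rewrite (negbTE yt).
  have bW : b \subset W by apply: subset_trans (b_sub Y) (subsetUl _ _).
  case: (eqVneq (c W) (c Q)) => [//|cWQ].
  case: (eqVneq (c W) (c P)) => [cWP|cWP].
    { exfalso; apply: Hnr.
      case: (eqVneq (c b) g) => [cbg|cbg].
      - apply: (rainbowB2 (b_sub setT) bW (FQ setT) WQ n3 n4).
        all: rewrite ?cWP ?cbg.
        all: try first [exact: cPQ | exact: ctg | exact: cFP | exact: cFQ | rewrite eq_sym; first [exact: cFP | exact: cFQ | exact: cPQ | exact: ctg]].
      - apply: (rainbowB2 (b_sub [set i]) bW (FQ _) WQ n2' n1).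
        all: rewrite ?cWP ?cm.
        all: try first [exact: cPQ | exact: cbg | exact: cFP | exact: cFQ | rewrite eq_sym; first [exact: cFP | exact: cFQ | exact: cPQ | exact: cbg]]. }
  have e1 := Srule Hnr cPQ PW (FP _) WQ (FQ _) n1 n2' cWP cWQ (cFP _) (cFQ _).
  have e2 := Srule Hnr cPQ PW (FP setT) WQ (FQ setT) n4 n3 cWP cWQ (cFP _) (cFQ _).
  by case/eqP: ctg; rewrite -cm -e1 e2.
pose G (Y : {set 'I_n}) := if Y == setT then Q else F Y :|: [set y].
exists G; split.
  apply: ind_of => X Y; rewrite /G.
  case: (eqVneq X setT) => [->|XT]; case: (eqVneq Y setT) => [->|YT] //=.
  - by rewrite !subxx.
  - rewrite subTset (negbTE YT); apply/negP => H.
    have : F setT :|: [set y] \subset F Y :|: [set y].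
      by rewrite subUset (subset_trans (FQ setT) H) /= sub1set !inE eqxx orbT.
    by rewrite suby subTset (negbTE YT).
  - rewrite subsetT; apply/subsetP => z; rewrite !inE => /orP [/(subsetP (FQ X))//| /eqP ->//].
move=> X Y; rewrite /G.
by case: (eqVneq X setT) => [_|XT]; case: (eqVneq Y setT) => [_|YT] //=; rewrite ?Wc.
Qed.


Lemma imset_sub_inj (T T' : finType) (f : T -> T') (A B : {set T}) :
  injective f -> (f @: A \subset f @: B) = (A \subset B).
Proof.
move=> fi; apply/idP/idP => [H|]; last exact: imsetS.
apply/subsetP => z zA; have := subsetP H (f z) (imset_f f zA).
by rewrite mem_imset.
Qed.

Lemma mono_small N n (c : {set 'I_(N + n)} -> nat) :
  (forall P Q : {set 'I_(N + n)}, P \subset Q -> N <= #|Q :\: P| -> c P = c Q) -> has_mono_copy n c.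
Proof.
move=> H.
pose w : 'I_n -> 'I_(N + n) := widen_ord (leq_addl N n).
have wi : injective w by move=> a b E; apply/val_inj; exact: (congr1 val E).
pose phi (Y : {set 'I_n}) := w @: Y.
have cT : forall Y, c (phi Y) = c setT.
  move=> Y; apply: H; first exact: subsetT.
  rewrite setTD; have E := cardsC (phi Y); rewrite card_ord in E.
  have Ha : #|phi Y| <= n.
    by rewrite card_imset //; apply: leq_trans (max_card _) _; rewrite card_ord.
  move: E Ha; move: #|phi Y| #|~: phi Y| => a b; lia.
exists phi; split; last by move=> X Y; rewrite !cT.
by apply: ind_of => X Y; rewrite imset_sub_inj.
Qed.

Lemma upper N n : 0 < n -> ramsey_prop 3 n N -> rainbow_ramsey_prop 2 n (N + n).
Proof.
move=> n0 HR c.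
case: (classic (has_rainbow_copy 2 c)) => [h|Hnr]; [by left|right].
case: (boolP [exists P : {set 'I_(N+n)}, exists Q : {set 'I_(N+n)},
   [&& P \subset Q, N <= #|Q :\: P| & c P != c Q]]); last first.
  move=> /existsPn H; apply: mono_small => P Q PQ HN; apply/eqP.
  by move: (H P) => /existsPn /(_ Q); rewrite PQ HN /= negbK.
move=> /existsP [P /existsP [Q /and3P [PQ HN cPQ]]].
pose e (i : 'I_N) : 'I_(N+n) := enum_val (widen_ord HN i).
have ei : injective e.
  move=> a b E; apply/val_inj; exact: (congr1 val (enum_val_inj E)).
have eD : forall i, e i \in Q :\: P by move=> i; exact: enum_valP.
pose h (X : {set 'I_N}) := P :|: e @: X.
have hP : forall X, P \subset h X by move=> X; apply: subsetUl.
have hQ : forall X, h X \subset Q.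
  move=> X; rewrite subUset PQ /=; apply/subsetP => z /imsetP [i _ ->].
  by have := eD i; rewrite inE => /andP [].
have hsub : forall X Y, (h X \subset h Y) = (X \subset Y).
  move=> X Y; rewrite -(imset_sub_inj _ _ ei); apply/idP/idP => H; last exact: setUS.
  apply/subsetP => z zX; have := subsetP H z (subsetP (subsetUr _ _) z zX).
  rewrite inE => /orP [zP|//].
  move: zX => /imsetP [i _ zi]; have := eD i; by rewrite -zi inE zP.
pose cls (v : nat) := if v == c P then 0 else if v == c Q then 1 else 2.
have cls3 : forall v, cls v < 3 by move=> v; rewrite /cls /=; case: (v == c P) => //; case: (v == c Q).
pose psi (X : {set 'I_N}) : 'I_3 := inord (cls (c (h X))).
have [f [[fi fs] fm]] := HR psi.
pose F Y := h (f Y).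
have clsF : forall X Y, cls (c (F X)) = cls (c (F Y)).
  move=> X Y; have := fm X Y; rewrite /psi => /(congr1 (@nat_of_ord 3)); rewrite !inordK //.
have HF : forall X Y, (F X \subset F Y) = (X \subset Y) by move=> X Y; rewrite /F hsub fs.
have FP : forall Y, P \subset F Y by move=> Y; apply: hP.
have FQ : forall Y, F Y \subset Q by move=> Y; apply: hQ.
case E: (cls (c (F set0))) => [|[|k]].
- have all : forall Y, c (F Y) = c P.
    move=> Y; have := clsF Y set0; rewrite E /cls.
    by case: (eqVneq (c (F Y)) (c P)) => //; case: ifP.
  by exists F; split; [exact: ind_of | move=> X Y; rewrite !all].
- have all : forall Y, c (F Y) = c Q.
    move=> Y; have := clsF Y set0; rewrite E /cls.
    by case: (eqVneq (c (F Y)) (c P)) => //; case: (eqVneq (c (F Y)) (c Q)).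
  by exists F; split; [exact: ind_of | move=> X Y; rewrite !all].
- have cFP : forall Y, c (F Y) != c P.
    move=> Y; have := clsF Y set0; rewrite E /cls.
    by case: (eqVneq (c (F Y)) (c P)).
  have cFQ : forall Y, c (F Y) != c Q.
    move=> Y; have := clsF Y set0; rewrite E /cls.
    by case: (eqVneq (c (F Y)) (c P)) => //; case: (eqVneq (c (F Y)) (c Q)).
  case: (eqVneq n 1) => [n1|n1].
    subst n; exact: (key1 Hnr PQ cPQ HF FP FQ cFP cFQ).
  have n2 : 1 < n by rewrite ltn_neqAle eq_sym n1 n0.
  exact: (key2 n2 Hnr PQ cPQ HF FP FQ cFP cFQ).
Qed.


Lemma ramsey_ex n : forall (C : finType), exists N, forall c : {set 'I_N} -> C, has_mono_copy n c.
Proof.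
elim: n => [|n IH] C.
  exists 0 => c.
  have e0 : forall X : {set 'I_0}, X = set0 by move=> X; apply/setP => -[m Hm].
  exists (fun _ => set0); split => //.
  by apply: ind_of => X Y; rewrite (e0 X) (e0 Y) !subxx.
set k := #|C|.
have [N' HN'] := IH {ffun 'I_k.+1 -> C}.
exists (N' + k) => c.
pose emb (X : {set 'I_N'}) (Z : {set 'I_k}) : {set 'I_(N'+k)} :=
  (lshift k @: X) :|: (@rshift N' k @: Z).
have embsub : forall X X' Z Z', (emb X Z \subset emb X' Z') = (X \subset X') && (Z \subset Z').
  move=> X X' Z Z'; apply/idP/andP => [H|[H1 H2]]; last by apply: setUSS; exact: imsetS.
  split; apply/subsetP => z zX.
    have := subsetP H (lshift k z); rewrite !inE mem_imset ?zX //=; last exact: lshift_inj.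
    move=> /(_ isT) /orP [|/imsetP [w _ /eqP]]; first by rewrite mem_imset //; exact: lshift_inj.
    by rewrite eq_lrshift.
  have := subsetP H (rshift N' z); rewrite !inE (mem_imset _ _ (@rshift_inj N' k)) zX orbT.
  move=> /(_ isT) /orP [/imsetP [w _ /eqP]|]; first by rewrite eq_rlshift.
  by rewrite mem_imset //; exact: rshift_inj.
pose chain (j : nat) : {set 'I_k} := [set z : 'I_k | z < j].
have chsub : forall a b, a <= k -> (chain a \subset chain b) = (a <= b).
  move=> a b ak; apply/subsetP/idP => [H|ab z].
    case: (leqP a b) => // ba; have bk : b < k by apply: leq_trans ba ak.
    by have := H (Ordinal bk); rewrite !inE /= ba ltnn => /(_ isT).
  by rewrite !inE => za; apply: leq_trans za ab.
pose c' (X : {set 'I_N'}) : {ffun 'I_k.+1 -> C} := [ffun j : 'I_k.+1 => c (emb X (chain j))].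
have [f [[fi fs] fm]] := HN' c'.
pose v := c' (f set0).
have [i [j [ij vij]]] : exists i j : 'I_k.+1, i < j /\ v i = v j.
  have : ~~ injectiveb v.
    apply/negP => /injectiveP vi; have := leq_card v vi; by rewrite card_ord ltnn.
  case/injectivePn => a [b ab vab]; case: (ltngtP a b) => h.
  - by exists a, b.
  - by exists b, a.
  - by case/eqP: ab; apply: val_inj.
pose res (Y : {set 'I_n.+1}) : {set 'I_n} := [set x | lift ord_max x \in Y].
have ressub : forall Y Y' : {set 'I_n.+1}, (Y \subset Y') = (res Y \subset res Y') && ((ord_max \in Y) ==> (ord_max \in Y')).
  move=> Y Y'; apply/idP/andP => [H|[H1 H2]].
    split; first by apply/subsetP => x; rewrite !inE; exact: (subsetP H).
    by apply/implyP; exact: (subsetP H).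
  apply/subsetP => y yY; case: (unliftP ord_max y) => [x yx|yx]; subst y.
    by have := subsetP H1 x; rewrite !inE; apply.
  exact: (implyP H2).
pose g (Y : {set 'I_n.+1}) := emb (f (res Y)) (chain (if ord_max \in Y then j else i)).
have ik : i <= k by rewrite -ltnS ltn_ord.
have jk : j <= k by rewrite -ltnS ltn_ord.
exists g; split.
  apply: ind_of => Y Y'; rewrite /g embsub fs ressub.
  case: (ord_max \in Y); case: (ord_max \in Y'); rewrite /= ?chsub // ?leqnn ?andbT ?andbF //.
  - by rewrite leqNgt ij andbF.
  - by rewrite (ltnW ij) andbT.
have cg : forall Y : {set 'I_n.+1}, c (g Y) = v i.
  move=> Y; rewrite /g.
  have e : c' (f (res Y)) = v by exact: fm.
  have := congr1 (fun w : {ffun 'I_k.+1 -> C} => w (if ord_max \in Y then j else i)) e.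
  rewrite /= ffunE => ->; case: ifP => _ //.
by move=> X Y; rewrite !cg.
Qed.


Lemma card_set2 : #|{set 'I_2}| = 4.
Proof.
rewrite -cardsT.
have -> : [set: {set 'I_2}] = powerset [set: 'I_2] by apply/setP => X; rewrite !inE subsetT.
by rewrite card_powerset cardsT card_ord.
Qed.

Lemma lower n M : rainbow_ramsey_prop 2 n M -> ramsey_prop 3 n M.
Proof.
move=> H c; case: (H (fun X => val (c X))) => [[f [_ inj]]|[f [fi fm]]].
  have inj' : injective (fun X => c (f X)) by move=> X Y E; apply: inj => /=; rewrite E.
  by have := leq_card _ inj'; rewrite card_set2 card_ord.
by exists f; split => // X Y; apply: val_inj; exact: fm.
Qed.

Lemma least_ex (P : nat -> Prop) : (exists n, P n) -> exists m, is_least P m.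
Proof.
case=> n; elim: n {-2}n (leqnn n) => [|n IH] m Hm Pm.
  by exists m; split=> // b _; move: Hm; rewrite leqn0 => /eqP ->.
case: (classic (exists b, b < m /\ P b)) => [[b [bm Pb]]|nb].
  apply: (IH b) => //; rewrite -ltnS; exact: leq_trans bm Hm.
exists m; split=> // b Pb; rewrite leqNgt; apply/negP => bm; apply: nb; by exists b.
Qed.

Theorem theorem1p6 (n : nat) (hn : 1 <= n) :
  exists r rr : nat,
    is_least (ramsey_prop 3 n) r /\
    is_least (rainbow_ramsey_prop 2 n) rr /\
    r <= rr /\ rr <= r + n.
Proof.
have [r [Hr Hrl]] : exists r, is_least (ramsey_prop 3 n) r.
  apply: least_ex; have [N HN] := ramsey_ex n 'I_3; by exists N.
have [rr [Hrr Hrrl]] : exists rr, is_least (rainbow_ramsey_prop 2 n) rr.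
  by apply: least_ex; exists (r + n); exact: upper.
exists r, rr; split; first by []; split; first by [].
split; first exact: Hrl (lower Hrr).
exact: Hrrl (upper hn Hr).
Qed.
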